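(* Let $H_1,H_2$ be graphs whose cores are both isomorphic to a graph $C$, and suppose there is a homomorphism from $H_1$ to $H_2$. Then the $C$-covering number of $H_1$ is at most the $C$-covering number of $H_2$.
   Context: A homomorphism $F\to F'$ is a vertex map sending edges to edges. A subgraph $C$ of $H$ is a core of $H$ if there is a homomorphism $H\to C$ but none from $H$ to a proper subgraph of $C$. A copy of $C$ in $F$ is a (not necessarily induced) subgraph of $F$ isomorphic to $C$. For a graph $F$ and a $c$-vertex graph $C$, a $C$-coloring of $F$ is a map $f:V(F)\to\{1,\dots,c\}$ such that the vertices of every copy of $C$ in $F$ receive pairwise distinct colors; $F$ is $C$-colorable if it has one. If $C$ is the core of $H$, a $C$-covering of $H$ of size $r$ is a collection $C_1,\dots,C_r\subseteq V(H)$ such that every copy of $C$ in $H$ lies in the subgraph induced by some $C_i$, and each induced subgraph $H[C_i]$ is $C$-colorable. The $C$-covering number of $H$ is the minimum size of a $C$-covering of $H$. *)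

(* Defs.v *)
From Stdlib Require Import ClassicalEpsilon.
From mathcomp Require Import all_boot.
Set Implicit Arguments. Unset Strict Implicit. Unset Printing Implicit Defensive.

Record sgraph := SGraph {
  svert :> finType;
  sadj : rel svert;
  sadj_sym : symmetric sadj;
  sadj_irr : irreflexive sadj }.

Definition is_hom (F F' : sgraph) (f : F -> F') : Prop :=
  forall x y, sadj x y -> sadj (f x) (f y).

Definition is_subgraph (H : sgraph) (S : {set H}) (E : rel H) : Prop :=
  (forall x y, E x y -> [&& sadj x y, x \in S & y \in S]) /\
  (forall x y, E x y -> E y x).

Definition hom_into (F H : sgraph) (S : {set H}) (E : rel H) (f : F -> H) : Prop :=
  (forall x, f x \in S) /\ (forall x y, sadj x y -> E (f x) (f y)).

Definition is_core (H : sgraph) (S : {set H}) (E : rel H) : Prop :=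
  is_subgraph S E /\
  (exists f : H -> H, hom_into S E f) /\
  ~ (exists (S' : {set H}) (E' : rel H),
        is_subgraph S' E' /\ S' \subset S /\ (forall x y, E' x y -> E x y) /\
        ~ (S' = S /\ (forall x y, E' x y = E x y)) /\
        exists f : H -> H, hom_into S' E' f).

Definition iso_to_sub (C H : sgraph) (S : {set H}) (E : rel H) : Prop :=
  exists g : C -> H, injective g /\ (forall y, y \in S <-> exists u, g u = y) /\
                     (forall u v, sadj u v = E (g u) (g v)).

Definition core_isomorphic (H C : sgraph) : Prop :=
  exists (S : {set H}) (E : rel H), is_core S E /\ iso_to_sub C S E.

(* A copy of C in F, given as an injective edge-preserving map (its image with
   the image edges is a, not necessarily induced, subgraph isomorphic to C). *)
Definition is_copy (C F : sgraph) (phi : C -> F) : Prop :=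
  injective phi /\ is_hom phi.

Definition is_C_coloring (C F : sgraph) (f : F -> 'I_#|C|) : Prop :=
  forall phi : C -> F, is_copy phi -> injective (f \o phi).

Definition C_colorable (C F : sgraph) : Prop :=
  exists f : F -> 'I_#|C|, is_C_coloring f.

Section Induced.
Variables (H : sgraph) (S : {set H}).
Definition ind_vert := {x : H | x \in S}.
Definition ind_adj : rel ind_vert := fun x y => sadj (val x) (val y).
Lemma ind_adj_sym : symmetric ind_adj.
Proof. by move=> x y; rewrite /ind_adj sadj_sym. Qed.
Lemma ind_adj_irr : irreflexive ind_adj.
Proof. by move=> x; rewrite /ind_adj sadj_irr. Qed.
Definition induced : sgraph := SGraph ind_adj_sym ind_adj_irr.
End Induced.

Definition is_C_covering (C H : sgraph) (cs : seq {set H}) : Prop :=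
  (forall phi : C -> H, is_copy phi ->
     exists2 S, S \in cs & forall u, phi u \in S) /\
  (forall S, S \in cs -> C_colorable C (induced S)).

Definition has_C_covering_of_size (C H : sgraph) (r : nat) : Prop :=
  exists cs : seq {set H}, size cs = r /\ is_C_covering C cs.

Definition has_cov_b (C H : sgraph) (r : nat) : bool :=
  if excluded_middle_informative (has_C_covering_of_size C H r) then true else false.

(* Existence of some C-covering (one set per injective map C -> H). *)
Lemma C_covering_exists (C H : sgraph) : exists r, has_cov_b C H r.
Proof.
pose cs := [seq [set x in codom phi] | phi : {ffun C -> H} <- enum {ffun C -> H} & injectiveb phi].
exists (size cs); rewrite /has_cov_b.
case: excluded_middle_informative => // nH; exfalso; apply: nH.
exists cs; split=> //; split.
  move=> phi [inj_phi _]; exists [set x in codom (finfun phi)].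
    apply/mapP; exists (finfun phi) => //; rewrite mem_filter mem_enum andbT.
    by apply/injectiveP => u v; rewrite !ffunE => /inj_phi.
  by move=> u; rewrite inE; apply/codomP; exists u; rewrite ffunE.
move=> S /mapP [phi]; rewrite mem_filter mem_enum andbT => /injectiveP inj_phi ->.
have memS (x : induced [set x in codom phi]) : val x \in codom phi.
  by have := valP x; rewrite inE.
exists (fun x => enum_rank (iinv (memS x))) => psi [inj_psi _] u v /=.
move/enum_rank_inj => e; apply: inj_psi; apply: val_inj.
by rewrite -(f_iinv (memS (psi u))) e f_iinv.
Qed.

Definition covering_number (C H : sgraph) : nat := ex_minn (C_covering_exists C H).

(* Main.v *)
Require Import Defs.
From Stdlib Require Import ClassicalEpsilon.
From mathcomp Require Import all_boot.
Set Implicit Arguments. Unset Strict Implicit. Unset Printing Implicit Defensive.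

Lemma hom_inj (H C : sgraph) : core_isomorphic H C ->
  forall psi : C -> H, is_hom psi -> injective psi.
Proof.
case=> S [E [[[subE symE] [[r [rS rE]] nocore]] [g [ginj [gS gE]]]]] psi hpsi.
move=> u v e.
have [//|nuv] := eqVneq u v.
exfalso; apply: nocore.
pose t := fun w => r (psi w).
have ht : forall a b, sadj a b -> E (t a) (t b) by move=> a b /hpsi /rE.
pose m := fun x => odflt u [pick w | g w == r x].
have gm : forall x, g (m x) = r x.
  move=> x; have /gS [w gw] := rS x.
  rewrite /m; case: pickP => [w' /eqP //|/(_ w)]; by rewrite gw eqxx.
pose S' := t @: [set: C].
pose E' := fun x y => [&& E x y, x \in S' & y \in S'].
exists S', E'; split; last split; last split; last split.
- split.
  + move=> x y /and3P [Exy xS yS]; by have /and3P [-> _ _] := subE _ _ Exy; rewrite xS yS.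
  + move=> x y /and3P [Exy xS yS]; by rewrite /E' symE // xS yS.
- apply/subsetP=> x /imsetP [w _ ->]; exact: rS.
- by move=> x y /and3P [].
- move=> [eS _].
  have cS : #|S| = #|C|.
    have -> : S = g @: [set: C].
      apply/setP=> x; apply/idP/idP.
        by move/gS=> [w <-]; apply: imset_f.
      by move/imsetP=> [w _ ->]; apply/gS; exists w.
    by rewrite card_imset // cardsT.
  have : #|S'| == #|[set: C]| by rewrite eS cS cardsT.
  move/imset_injP=> tinj.
  by move/eqP: nuv; apply; apply: tinj; rewrite ?inE // /t e.
- exists (fun x => t (m x)); split.
  + by move=> x; apply: imset_f.
  + move=> x y axy; rewrite /E' !imset_f // andbT ht //.
    by rewrite gE !gm; apply: rE.
Qed.

Theorem lemma13 (H1 H2 C : sgraph) :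
  core_isomorphic H1 C -> core_isomorphic H2 C ->
  (exists f : H1 -> H2, is_hom f) ->
  covering_number C H1 <= covering_number C H2.
Proof.
move=> _ c2 [f hf].
have injc : forall psi : C -> H1, is_hom psi -> injective (f \o psi).
  move=> psi hpsi; apply: (hom_inj c2) => x y /hpsi /hf //.
rewrite /covering_number.
case: ex_minnP => n1 _ min1.
case: ex_minnP => n2 P2 _.
apply: min1.
move: P2; rewrite /has_cov_b.
case: excluded_middle_informative => // [[cs [scs [cov col]]]] _.
case: excluded_middle_informative => // nH; exfalso; apply: nH.
exists [seq f @^-1: (A : {set H2}) | A <- cs]; split; first by rewrite size_map.
split.
- move=> phi [iphi hphi].
  have [A Scs HS] := cov (f \o phi) (conj (injc _ hphi) (fun x y a => hf _ _ (hphi _ _ a))).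
  exists (f @^-1: A); first exact: map_f.
  by move=> w; rewrite inE; apply: HS.
- move=> T /mapP [A Scs ->].
  have [c hc] := col A Scs.
  have pre : forall x : induced (f @^-1: A), f (val x) \in A.
    by move=> x; have := valP x; rewrite inE.
  pose lift := fun x : induced (f @^-1: A) => (exist _ (f (val x)) (pre x) : induced A).
  exists (fun x => c (lift x)) => psi [ipsi hpsi].
  have : injective (lift \o psi).
    move=> a b /(congr1 val) /= e.
    apply: ipsi; apply: val_inj.
    have hv : is_hom (fun w => val (psi w) : H1).
      by move=> x y /hpsi.
    by rewrite (injc _ hv a b e).
  move=> il.
  have := hc (lift \o psi) (conj il (fun x y a => hf _ _ (hpsi _ _ a))).
  by [].
Qed.
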